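(* Let $X$ be a Banach lattice with a bibasis, and let $D\subseteq X$ be a subset whose linear span is dense in $X$. Then there exists a u-frame $(x_j,f_j)_{j=1}^\infty$ of $X$ such that $x_j\in D$ for all $j\in\mathbb{N}$.
   Context: In a Banach lattice $X$, a sequence $(y_n)$ converges uniformly to $y$ (written $y_n\xrightarrow{u}y$) if there is a positive vector $w\in X$ (a regulator) such that for every $\varepsilon>0$ there is $N$ with $|y-y_n|\le\varepsilon w$ for all $n\ge N$. A sequence of pairs $(x_j,f_j)_{j=1}^\infty$ in $X\times X^*$ is a Schauder frame of $X$ if $x=\sum_{j=1}^\infty f_j(x)x_j$ in norm for all $x\in X$; it is a u-frame if moreover $\sum_{j=1}^n f_j(x)x_j\xrightarrow{u}x$ for every $x\in X$. A Schauder basis $(x_j)$ of $X$ with biorthogonal functionals $(x_j^* )$ is a bibasis if $\sum_{j=1}^n x_j^*(x)x_j\xrightarrow{u}x$ for every $x\in X$. *)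

(* Defs.v *)
From Stdlib Require Import Reals List.
Open Scope R_scope.

Record BanachLattice := {
  bl_car :> Type;
  bl_zero : bl_car;
  bl_add : bl_car -> bl_car -> bl_car;
  bl_opp : bl_car -> bl_car;
  bl_scal : R -> bl_car -> bl_car;
  bl_norm : bl_car -> R;
  bl_le : bl_car -> bl_car -> Prop;
  bl_sup : bl_car -> bl_car -> bl_car;
  bl_addA : forall x y z, bl_add x (bl_add y z) = bl_add (bl_add x y) z;
  bl_addC : forall x y, bl_add x y = bl_add y x;
  bl_add0 : forall x, bl_add x bl_zero = x;
  bl_addN : forall x, bl_add x (bl_opp x) = bl_zero;
  bl_scal1 : forall x, bl_scal 1 x = x;
  bl_scalA : forall a b x, bl_scal a (bl_scal b x) = bl_scal (a * b) x;
  bl_scalDr : forall a x y, bl_scal a (bl_add x y) = bl_add (bl_scal a x) (bl_scal a y);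
  bl_scalDl : forall a b x, bl_scal (a + b) x = bl_add (bl_scal a x) (bl_scal b x);
  bl_norm_ge0 : forall x, 0 <= bl_norm x;
  bl_norm_eq0 : forall x, bl_norm x = 0 -> x = bl_zero;
  bl_normZ : forall a x, bl_norm (bl_scal a x) = Rabs a * bl_norm x;
  bl_normD : forall x y, bl_norm (bl_add x y) <= bl_norm x + bl_norm y;
  bl_le_refl : forall x, bl_le x x;
  bl_le_antisym : forall x y, bl_le x y -> bl_le y x -> x = y;
  bl_le_trans : forall x y z, bl_le x y -> bl_le y z -> bl_le x z;
  bl_sup_l : forall x y, bl_le x (bl_sup x y);
  bl_sup_r : forall x y, bl_le y (bl_sup x y);
  bl_sup_least : forall x y z, bl_le x z -> bl_le y z -> bl_le (bl_sup x y) z;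
  bl_le_add : forall x y z, bl_le x y -> bl_le (bl_add x z) (bl_add y z);
  bl_le_scal : forall a x y, 0 <= a -> bl_le x y -> bl_le (bl_scal a x) (bl_scal a y);
  bl_norm_mono : forall x y,
      bl_le (bl_sup x (bl_opp x)) (bl_sup y (bl_opp y)) -> bl_norm x <= bl_norm y;
  bl_complete : forall s : nat -> bl_car,
      (forall eps, eps > 0 -> exists N, forall n m, (n >= N)%nat -> (m >= N)%nat ->
          bl_norm (bl_add (s n) (bl_opp (s m))) < eps) ->
      exists l, forall eps, eps > 0 -> exists N, forall n, (n >= N)%nat ->
          bl_norm (bl_add l (bl_opp (s n))) < eps
}.

Section Defs.
Variable X : BanachLattice.

Definition bsub (x y : X) : X := bl_add X x (bl_opp X y).
Definition babs (x : X) : X := bl_sup X x (bl_opp X x).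

Definition norm_conv (s : nat -> X) (l : X) : Prop :=
  forall eps, eps > 0 -> exists N, forall n, (n >= N)%nat -> bl_norm X (bsub l (s n)) < eps.

Definition u_conv (s : nat -> X) (l : X) : Prop :=
  exists w : X, bl_le X (bl_zero X) w /\
    forall eps, eps > 0 -> exists N, forall n, (n >= N)%nat ->
      bl_le X (babs (bsub l (s n))) (bl_scal X eps w).

(** partial sums  sum_{j < n} a_j x_j  (indices start at 0) *)
Fixpoint psum (a : nat -> R) (xs : nat -> X) (n : nat) : X :=
  match n with
  | O => bl_zero X
  | S k => bl_add X (psum a xs k) (bl_scal X (a k) (xs k))
  end.

Definition in_dual (f : X -> R) : Prop :=
  (forall x y, f (bl_add X x y) = f x + f y) /\
  (forall a x, f (bl_scal X a x) = a * f x) /\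
  (exists C, forall x, Rabs (f x) <= C * bl_norm X x).

Definition schauder_frame (xs : nat -> X) (fs : nat -> X -> R) : Prop :=
  (forall j, in_dual (fs j)) /\
  forall x, norm_conv (psum (fun j => fs j x) xs) x.

Definition u_frame (xs : nat -> X) (fs : nat -> X -> R) : Prop :=
  schauder_frame xs fs /\
  forall x, u_conv (psum (fun j => fs j x) xs) x.

Definition schauder_basis (xs : nat -> X) : Prop :=
  forall x, exists! a : nat -> R, norm_conv (psum a xs) x.

Definition bibasis (xs : nat -> X) : Prop :=
  schauder_basis xs /\
  forall x (a : nat -> R), norm_conv (psum a xs) x -> u_conv (psum a xs) x.

Fixpoint lincomb (l : list (R * X)) : X :=
  match l with
  | nil => bl_zero X
  | (c, v) :: l' => bl_add X (bl_scal X c v) (lincomb l')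
  end.

Definition in_span (D : X -> Prop) (y : X) : Prop :=
  exists l : list (R * X), Forall (fun p => D (snd p)) l /\ y = lincomb l.

Definition span_dense (D : X -> Prop) : Prop :=
  forall x eps, eps > 0 -> exists y, in_span D y /\ bl_norm X (bsub x y) < eps.

End Defs.

(* Main.v *)
Require Import Defs.
From Stdlib Require Import Reals List Lra Lia Classical ClassicalEpsilon FunctionalExtensionality.
Import ListNotations.
Open Scope R_scope.


Section Alg.
Variable X : BanachLattice.
Local Notation add := (bl_add X).
Local Notation opp := (bl_opp X).
Local Notation scal := (bl_scal X).
Local Notation nrm := (bl_norm X).
Local Notation le := (bl_le X).
Local Notation zero := (bl_zero X).
Local Notation sub := (bsub X).
Local Notation abs := (babs X).

Lemma norm_mono' x y : le (abs x) (abs y) -> nrm x <= nrm y.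
Proof. apply bl_norm_mono. Qed.
Lemma add0l x : add zero x = x.
Proof. rewrite bl_addC; apply bl_add0. Qed.
Lemma addNl x : add (opp x) x = zero.
Proof. rewrite bl_addC; apply bl_addN. Qed.
Lemma add_cancel x y z : add x y = add x z -> y = z.
Proof.
  intro H. rewrite <- (add0l y), <- (add0l z), <- (addNl x), <- !bl_addA, H. reflexivity.
Qed.
Lemma opp_uniq x y : add x y = zero -> y = opp x.
Proof. intro H. apply (add_cancel x). rewrite H, bl_addN. reflexivity. Qed.
Lemma oppK x : opp (opp x) = x.
Proof. symmetry. apply opp_uniq. apply addNl. Qed.
Lemma opp0 : opp zero = zero.
Proof. symmetry. apply opp_uniq. apply bl_add0. Qed.
Lemma add4 a b c d : add (add a b) (add c d) = add (add a c) (add b d).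
Proof.
  rewrite <- !bl_addA. f_equal. rewrite !bl_addA. f_equal. apply bl_addC.
Qed.
Lemma oppD x y : opp (add x y) = add (opp x) (opp y).
Proof.
  symmetry. apply opp_uniq. rewrite add4, !bl_addN, bl_add0. reflexivity.
Qed.
Lemma scal0l x : scal 0 x = zero.
Proof.
  apply (add_cancel (scal 0 x)). rewrite <- bl_scalDl, Rplus_0_l, bl_add0. reflexivity.
Qed.
Lemma scal0r a : scal a zero = zero.
Proof.
  apply (add_cancel (scal a zero)). rewrite <- bl_scalDr, !bl_add0. reflexivity.
Qed.
Lemma scalN1 x : scal (-1) x = opp x.
Proof.
  apply opp_uniq. rewrite <- (bl_scal1 X x) at 1. rewrite <- bl_scalDl.
  replace (1 + -1) with 0 by ring. apply scal0l.
Qed.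
Lemma scalNl a x : scal (- a) x = opp (scal a x).
Proof. rewrite <- scalN1, bl_scalA. f_equal. ring. Qed.
Lemma scalNr a x : scal a (opp x) = opp (scal a x).
Proof. rewrite <- !scalN1, !bl_scalA. f_equal. ring. Qed.
Lemma nrm0 : nrm zero = 0.
Proof. rewrite <- (scal0l zero), bl_normZ, Rabs_R0. ring. Qed.
Lemma nrm_opp x : nrm (opp x) = nrm x.
Proof. rewrite <- scalN1, bl_normZ, Rabs_left by lra. ring. Qed.
Lemma sub_add x y z : sub x z = add (sub x y) (sub y z).
Proof.
  unfold bsub. rewrite bl_addA, <- (bl_addA _ x), addNl, bl_add0. reflexivity.
Qed.
Lemma sub_opp x y : sub y x = opp (sub x y).
Proof. unfold bsub. rewrite oppD, oppK, bl_addC. reflexivity. Qed.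
Lemma nrm_sub_sym x y : nrm (sub x y) = nrm (sub y x).
Proof. rewrite (sub_opp x y), nrm_opp. reflexivity. Qed.
Lemma nrm_tri x y z : nrm (sub x z) <= nrm (sub x y) + nrm (sub y z).
Proof. rewrite (sub_add x y z). apply bl_normD. Qed.
Lemma sub_eq0 x y : nrm (sub x y) = 0 -> x = y.
Proof.
  intro H. apply bl_norm_eq0 in H. unfold bsub in H.
  apply opp_uniq in H. rewrite <- (oppK x), <- H, oppK. auto.
Qed.
Lemma sub_diag x : sub x x = zero.
Proof. apply bl_addN. Qed.
Lemma sub0r x : sub x zero = x.
Proof. unfold bsub. rewrite opp0, bl_add0. auto. Qed.
Lemma sub0l x : sub zero x = opp x.
Proof. unfold bsub. apply add0l. Qed.
Lemma subDD a b c d : sub (add a b) (add c d) = add (sub a c) (sub b d).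
Proof. unfold bsub. rewrite oppD, add4. reflexivity. Qed.
Lemma scal_sub a x y : scal a (sub x y) = sub (scal a x) (scal a y).
Proof. unfold bsub. rewrite bl_scalDr, scalNr. reflexivity. Qed.
Lemma add_sub x y : add (sub x y) y = x.
Proof. unfold bsub. rewrite <- bl_addA, addNl, bl_add0. auto. Qed.
Lemma sub_add_l x y : sub (add x y) y = x.
Proof. unfold bsub. rewrite <- bl_addA, bl_addN, bl_add0. auto. Qed.
Lemma scal_add2 y : add y y = scal 2 y.
Proof. rewrite <- (bl_scal1 X y) at 1 2. rewrite <- bl_scalDl. f_equal. Qed.
Lemma nrm_sub_le x y : nrm (sub x y) <= nrm x + nrm y.
Proof. unfold bsub. rewrite <- (nrm_opp y). apply bl_normD. Qed.

Lemma le_add2 a b c d : le a b -> le c d -> le (add a c) (add b d).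
Proof.
  intros H1 H2. apply bl_le_trans with (add b c). apply bl_le_add; auto.
  rewrite (bl_addC _ b c), (bl_addC _ b d). apply bl_le_add; auto.
Qed.
Lemma le_opp a b : le a b -> le (opp b) (opp a).
Proof.
  intro H. pose proof (bl_le_add X _ _ (add (opp a) (opp b)) H) as H'.
  rewrite bl_addA, bl_addN, add0l in H'.
  rewrite (bl_addC _ (opp a)), bl_addA, bl_addN, add0l in H'. auto.
Qed.
Lemma le_opp0 a : le zero a -> le (opp a) zero.
Proof. intro H. rewrite <- opp0. apply le_opp; auto. Qed.
Lemma le_sub0 a b : le a b -> le zero (sub b a).
Proof.
  intro H. unfold bsub. rewrite <- (bl_addN X a). apply bl_le_add. auto.
Qed.
Lemma le_sub0_inv a b : le zero (sub b a) -> le a b.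
Proof.
  intro H. apply (bl_le_add X _ _ a) in H. rewrite add0l, add_sub in H. auto.
Qed.
Lemma abs_ge x : le x (abs x).
Proof. apply bl_sup_l. Qed.
Lemma abs_geN x : le (opp x) (abs x).
Proof. apply bl_sup_r. Qed.
Lemma le_half y : le zero (scal 2 y) -> le zero y.
Proof.
  intro H. apply (bl_le_scal X (/2)) in H; [|lra].
  rewrite scal0r, bl_scalA in H. replace (/2*2) with 1 in H by field.
  rewrite bl_scal1 in H. auto.
Qed.
Lemma abs_nonneg x : le zero (abs x).
Proof.
  apply le_half. rewrite <- scal_add2. rewrite <- (bl_addN X x).
  apply le_add2; [apply abs_ge|apply abs_geN].
Qed.
Lemma abs_pos y : le zero y -> abs y = y.
Proof.
  intro H. apply bl_le_antisym.
  - apply bl_sup_least. apply bl_le_refl. apply bl_le_trans with zero; auto.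
    apply le_opp0; auto.
  - apply abs_ge.
Qed.
Lemma abs_abs x : abs (abs x) = abs x.
Proof. apply abs_pos, abs_nonneg. Qed.
Lemma nrm_abs x : nrm (abs x) = nrm x.
Proof.
  apply Rle_antisym.
  - apply norm_mono'. rewrite abs_abs. apply bl_le_refl.
  - apply norm_mono'. rewrite abs_abs. apply bl_le_refl.
Qed.
Lemma nrm_le_abs x y : le (abs x) y -> nrm x <= nrm y.
Proof.
  intro H. apply norm_mono'. rewrite (abs_pos y); auto.
  apply bl_le_trans with (abs x); auto. apply abs_nonneg.
Qed.
Lemma abs_add x y : le (abs (add x y)) (add (abs x) (abs y)).
Proof.
  apply bl_sup_least. apply le_add2; apply abs_ge.
  rewrite oppD. apply le_add2; apply abs_geN.
Qed.
Lemma abs_opp x : abs (opp x) = abs x.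
Proof.
  unfold babs. rewrite oppK. apply bl_le_antisym; apply bl_sup_least;
  first [apply bl_sup_l | apply bl_sup_r].
Qed.
Lemma abs_sub_sym x y : abs (sub x y) = abs (sub y x).
Proof. rewrite (sub_opp x y), abs_opp. auto. Qed.
Lemma abs_scal c x : le (abs (scal c x)) (scal (Rabs c) (abs x)).
Proof.
  destruct (Rle_dec 0 c) as [Hc|Hc].
  - rewrite Rabs_pos_eq by auto. apply bl_sup_least.
    apply bl_le_scal; auto; apply abs_ge.
    rewrite <- scalNr. apply bl_le_scal; auto; apply abs_geN.
  - rewrite Rabs_left by lra. apply bl_sup_least.
    replace c with (- - c) at 1 by ring. rewrite scalNl, <- scalNr.
    apply bl_le_scal; [lra|apply abs_geN].
    replace c with (- - c) at 1 by ring. rewrite scalNl, oppK.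
    apply bl_le_scal; [lra|apply abs_ge].
Qed.
Lemma scal_mono a b y : le zero y -> a <= b -> le (scal a y) (scal b y).
Proof.
  intros Hy Hab. replace b with (a + (b - a)) by ring. rewrite bl_scalDl.
  rewrite <- (bl_add0 X (scal a y)) at 1. rewrite (bl_addC _ (scal a y) zero).
  rewrite (bl_addC _ (scal a y)). apply bl_le_add.
  rewrite <- (scal0r (b - a)). apply bl_le_scal; auto. lra.
Qed.
Lemma scal_nonneg a y : 0 <= a -> le zero y -> le zero (scal a y).
Proof. intros. rewrite <- (scal0r a). apply bl_le_scal; auto. Qed.
Lemma add_nonneg a b : le zero a -> le zero b -> le zero (add a b).
Proof. intros. rewrite <- (bl_add0 X zero). apply le_add2; auto. Qed.
Lemma le_add_r a b : le zero b -> le a (add a b).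
Proof.
  intros. rewrite <- (bl_add0 X a) at 1. rewrite (bl_addC _ a zero), (bl_addC _ a b).
  apply bl_le_add; auto.
Qed.
Lemma abs_tri x y z : le (abs (sub x z)) (add (abs (sub x y)) (abs (sub y z))).
Proof. rewrite (sub_add x y z). apply abs_add. Qed.
Lemma abs_zero : abs zero = zero.
Proof. apply abs_pos, bl_le_refl. Qed.

Lemma cone_closed (s : nat -> X) l :
  (forall n, le zero (s n)) -> norm_conv X s l -> le zero l.
Proof.
  intros Hs Hc. set (ng := bl_sup X (opp l) zero).
  assert (Hng0 : le zero ng) by apply bl_sup_r.
  assert (Hb : forall n, nrm ng <= nrm (sub l (s n))).
  { intro n. apply norm_mono'. rewrite (abs_pos ng Hng0).
    rewrite abs_sub_sym. apply bl_sup_least.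
    - apply bl_le_trans with (sub (s n) l); [|apply abs_ge].
      unfold bsub. rewrite (bl_addC _ (s n)). rewrite <- (bl_add0 X (opp l)) at 1.
      apply le_add2; [apply bl_le_refl|auto].
    - apply abs_nonneg. }
  assert (H0 : nrm ng = 0).
  { apply Rle_antisym; [|apply bl_norm_ge0].
    apply Rnot_lt_le. intro Hp. destruct (Hc _ Hp) as [N HN].
    specialize (HN N (le_n N)). specialize (Hb N). lra. }
  apply bl_norm_eq0 in H0.
  assert (le (opp l) zero) by (rewrite <- H0; apply bl_sup_l).
  apply le_opp in H. rewrite oppK, opp0 in H. auto.
Qed.
End Alg.

Lemma small_le a b : (forall eps, eps > 0 -> a <= b + eps) -> a <= b.
Proof.
  intro H. apply Rnot_lt_le. intro Hlt. specialize (H ((a - b)/2)). lra.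
Qed.

Lemma half_pow_pos n : 0 < (/2)^n.
Proof. apply pow_lt. lra. Qed.

Lemma half_pow_S n : (/2)^(S n) = /2 * (/2)^n.
Proof. reflexivity. Qed.

Lemma half_pow_small eps : eps > 0 -> exists N, forall n, (n >= N)%nat -> (/2)^n < eps.
Proof.
  intro He. destruct (pow_lt_1_zero (/2)) with eps as [N HN].
  rewrite Rabs_pos_eq; lra. auto.
  exists N. intros n Hn. specialize (HN n Hn). rewrite Rabs_pos_eq in HN; auto.
  left; apply half_pow_pos.
Qed.

Lemma half_pow_le n m : (n <= m)%nat -> (/2)^m <= (/2)^n.
Proof.
  intro H. induction H. lra. rewrite half_pow_S. pose proof (half_pow_pos m). lra.
Qed.

Lemma geom_tail_R (s : nat -> R) K :
  (forall n, Rabs (s (S n) - s n) <= K * (/2)^n) ->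
  forall n d, Rabs (s (n + d)%nat - s n) <= 2 * K * ((/2)^n - (/2)^(n+d)).
Proof.
  intros H n d. induction d.
  - rewrite Nat.add_0_r. replace (s n - s n) with 0 by ring. rewrite Rabs_R0. lra.
  - rewrite Nat.add_succ_r.
    replace (s (S (n + d)) - s n) with ((s (S (n+d)) - s (n+d)%nat) + (s (n+d)%nat - s n)) by ring.
    eapply Rle_trans. apply Rabs_triang. specialize (H (n+d)%nat).
    rewrite half_pow_S. lra.
Qed.

Lemma geom_conv_R (s : nat -> R) K :
  (forall n, Rabs (s (S n) - s n) <= K * (/2)^n) ->
  exists l, Un_cv s l /\ forall n, Rabs (l - s n) <= 2 * K * (/2)^n.
Proof.
  intro H. pose proof (geom_tail_R s K H) as HT.
  assert (HK : 0 <= K).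
  { specialize (H O). pose proof (Rabs_pos (s 1%nat - s 0%nat)). simpl in H. lra. }
  assert (HT' : forall n m, (n <= m)%nat -> Rabs (s m - s n) <= 2 * K * (/2)^n).
  { intros n m Hnm. replace m with (n + (m - n))%nat by lia. eapply Rle_trans. apply HT.
    pose proof (half_pow_pos (n + (m - n))). nra. }
  assert (HC : Cauchy_crit s).
  { intros eps He. destruct (half_pow_small (eps / (2*K+1))) as [N HN].
    apply Rdiv_lt_0_compat; lra.
    exists N. intros n m Hn Hm. unfold Rdist.
    assert (Hb : forall p q, (N <= p)%nat -> (p <= q)%nat -> Rabs (s q - s p) < eps).
    { intros p q Hp Hq. eapply Rle_lt_trans. apply HT'; auto.
      specialize (HN p Hp). apply Rmult_lt_compat_l with (r := 2*K+1) in HN; [|lra].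
      replace ((2 * K + 1) * (eps / (2 * K + 1))) with eps in HN by (field; lra).
      pose proof (half_pow_pos p). nra. }
    destruct (Nat.le_ge_cases n m).
    - rewrite Rabs_minus_sym. apply Hb; auto.
    - apply Hb; auto. }
  destruct (R_complete s HC) as [l Hl]. exists l. split; auto.
  intro n. apply small_le. intros eps He. destruct (Hl eps He) as [N HN].
  specialize (HN (max N n) (Nat.le_max_l _ _)). unfold Rdist in HN.
  specialize (HT' n (max N n) (Nat.le_max_r _ _)).
  replace (l - s n) with ((l - s (max N n)) + (s (max N n) - s n)) by ring.
  eapply Rle_trans. apply Rabs_triang. rewrite Rabs_minus_sym in HN. lra.
Qed.

Section An.
Variable X : BanachLattice.
Local Notation add := (bl_add X).
Local Notation opp := (bl_opp X).
Local Notation scal := (bl_scal X).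
Local Notation nrm := (bl_norm X).
Local Notation le := (bl_le X).
Local Notation zero := (bl_zero X).
Local Notation sub := (bsub X).
Local Notation abs := (babs X).

Lemma subBB a b c d : sub (sub a b) (sub c d) = sub (sub a c) (sub b d).
Proof.
  change (sub (add a (opp b)) (add c (opp d)) = sub (sub a c) (sub b d)).
  rewrite subDD. unfold bsub at 3. f_equal. unfold bsub. rewrite oppD, !oppK. reflexivity.
Qed.

Lemma conv_ext (s t : nat -> X) l : (forall n, s n = t n) -> norm_conv X s l -> norm_conv X t l.
Proof.
  intros H Hc eps He. destruct (Hc eps He) as [N HN]. exists N. intros n Hn.
  rewrite <- H. auto.
Qed.

Lemma conv_unique (s : nat -> X) l1 l2 : norm_conv X s l1 -> norm_conv X s l2 -> l1 = l2.
Proof.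
  intros H1 H2. apply sub_eq0. apply Rle_antisym; [|apply bl_norm_ge0].
  apply small_le. intros eps He. rewrite Rplus_0_l.
  destruct (H1 (eps/2)) as [N1 HN1]. lra. destruct (H2 (eps/2)) as [N2 HN2]. lra.
  specialize (HN1 (max N1 N2) (Nat.le_max_l _ _)).
  specialize (HN2 (max N1 N2) (Nat.le_max_r _ _)).
  eapply Rle_trans. apply (nrm_tri X l1 (s (max N1 N2)) l2).
  rewrite (nrm_sub_sym X _ l2). lra.
Qed.

Lemma conv_add (s t : nat -> X) l m : norm_conv X s l -> norm_conv X t m ->
  norm_conv X (fun n => add (s n) (t n)) (add l m).
Proof.
  intros H1 H2 eps He.
  destruct (H1 (eps/2)) as [N1 HN1]. lra. destruct (H2 (eps/2)) as [N2 HN2]. lra.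
  exists (max N1 N2). intros n Hn. rewrite subDD.
  eapply Rle_lt_trans. apply bl_normD.
  specialize (HN1 n ltac:(lia)). specialize (HN2 n ltac:(lia)). lra.
Qed.

Lemma conv_scal (s : nat -> X) l c : norm_conv X s l ->
  norm_conv X (fun n => scal c (s n)) (scal c l).
Proof.
  intros H eps He.
  destruct (H (eps / (Rabs c + 1))) as [N HN].
  apply Rdiv_lt_0_compat; [lra|pose proof (Rabs_pos c); lra].
  exists N. intros n Hn. rewrite <- scal_sub, bl_normZ.
  specialize (HN n Hn). pose proof (Rabs_pos c). pose proof (bl_norm_ge0 X (sub l (s n))).
  apply Rle_lt_trans with ((Rabs c + 1) * nrm (sub l (s n))). nra.
  apply Rmult_lt_compat_l with (r := Rabs c + 1) in HN; [|lra].
  replace ((Rabs c + 1) * (eps / (Rabs c + 1))) with eps in HN by (field; lra). auto.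
Qed.

Lemma conv_le (s : nat -> X) l y B n : norm_conv X s l ->
  (forall m, (m >= n)%nat -> nrm (sub (s m) y) <= B) -> nrm (sub l y) <= B.
Proof.
  intros Hc Hb. apply small_le. intros eps He. destruct (Hc eps He) as [N HN].
  specialize (HN (max N n) (Nat.le_max_l _ _)). specialize (Hb (max N n) (Nat.le_max_r _ _)).
  eapply Rle_trans. apply (nrm_tri X l (s (max N n)) y). lra.
Qed.

Lemma geom_tail (s : nat -> X) K :
  (forall n, nrm (sub (s (S n)) (s n)) <= K * (/2)^n) ->
  forall n d, nrm (sub (s (n + d)%nat) (s n)) <= 2 * K * ((/2)^n - (/2)^(n+d)).
Proof.
  intros H n d. induction d.
  - rewrite Nat.add_0_r, sub_diag, nrm0. lra.
  - rewrite Nat.add_succ_r. eapply Rle_trans. apply (nrm_tri X _ (s (n+d)%nat)).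
    specialize (H (n+d)%nat). rewrite half_pow_S. lra.
Qed.

Lemma geom_le (s : nat -> X) K :
  (forall n, nrm (sub (s (S n)) (s n)) <= K * (/2)^n) ->
  forall n m, (n <= m)%nat -> nrm (sub (s m) (s n)) <= 2 * K * (/2)^n.
Proof.
  intros H n m Hnm.
  assert (HK : 0 <= K).
  { specialize (H O). pose proof (bl_norm_ge0 X (sub (s 1%nat) (s 0%nat))). simpl in H. lra. }
  replace m with (n + (m - n))%nat by lia. eapply Rle_trans. apply geom_tail; auto.
  pose proof (half_pow_pos (n + (m - n))). nra.
Qed.

Lemma geom_conv (s : nat -> X) K :
  (forall n, nrm (sub (s (S n)) (s n)) <= K * (/2)^n) ->
  exists l, norm_conv X s l /\ forall n, nrm (sub l (s n)) <= 2 * K * (/2)^n.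
Proof.
  intro H. pose proof (geom_le s K H) as HT'.
  assert (HK : 0 <= K).
  { specialize (H O). pose proof (bl_norm_ge0 X (sub (s 1%nat) (s 0%nat))). simpl in H. lra. }
  assert (Hb : forall eps, eps > 0 -> exists N, forall p q, (N <= p)%nat -> (p <= q)%nat ->
      nrm (sub (s q) (s p)) < eps).
  { intros eps He. destruct (half_pow_small (eps / (2*K+1))) as [N HN].
    apply Rdiv_lt_0_compat; lra.
    exists N. intros p q Hp Hq. eapply Rle_lt_trans. apply HT'; auto.
    specialize (HN p Hp). apply Rmult_lt_compat_l with (r := 2*K+1) in HN; [|lra].
    replace ((2 * K + 1) * (eps / (2 * K + 1))) with eps in HN by (field; lra).
    pose proof (half_pow_pos p). nra. }
  destruct (bl_complete X s) as [l Hl].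
  { intros eps He. destruct (Hb eps He) as [N HN]. exists N. intros n m Hn Hm.
    destruct (Nat.le_ge_cases n m).
    - fold (sub (s n) (s m)). rewrite nrm_sub_sym. apply HN; auto.
    - apply HN; auto. }
  exists l. split; [exact Hl|].
  intro n. 
  apply (conv_le s l (s n) _ n); [exact Hl|]. intros m Hm.
  apply HT'. lia.
Qed.

Lemma psum_add a b (xs : nat -> X) n :
  psum X (fun j => a j + b j) xs n = add (psum X a xs n) (psum X b xs n).
Proof.
  induction n; simpl. rewrite bl_add0; auto.
  rewrite IHn, bl_scalDl, add4. auto.
Qed.
Lemma psum_scal c a (xs : nat -> X) n :
  psum X (fun j => c * a j) xs n = scal c (psum X a xs n).
Proof.
  induction n; simpl. rewrite scal0r; auto.
  rewrite IHn, bl_scalDr, bl_scalA. auto.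
Qed.
Lemma psum_sub a b (xs : nat -> X) n :
  psum X (fun j => a j - b j) xs n = sub (psum X a xs n) (psum X b xs n).
Proof.
  unfold Rminus. rewrite psum_add. unfold bsub. f_equal.
  rewrite <- scalN1, <- psum_scal. f_equal. apply functional_extensionality. intro. ring.
Qed.
Lemma psum_vsub a (u v : nat -> X) n :
  psum X a (fun j => sub (u j) (v j)) n = sub (psum X a u n) (psum X a v n).
Proof.
  induction n; simpl. rewrite sub_diag; auto.
  rewrite IHn, scal_sub, subDD. auto.
Qed.
Lemma psum_S_sub a (xs : nat -> X) n : sub (psum X a xs (S n)) (psum X a xs n) = scal (a n) (xs n).
Proof.
  simpl. rewrite bl_addC. apply sub_add_l.
Qed.
Lemma psum_zero (xs : nat -> X) n : psum X (fun _ => 0) xs n = zero.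
Proof. induction n; simpl; auto. rewrite IHn, scal0l, bl_add0. auto. Qed.
Lemma nrm_psum_le a (xs : nat -> X) n B :
  (forall j, (j < n)%nat -> nrm (scal (a j) (xs j)) <= B) -> nrm (psum X a xs n) <= INR n * B.
Proof.
  induction n; intro H. simpl. rewrite nrm0. lra.
  change (psum X a xs (S n)) with (add (psum X a xs n) (scal (a n) (xs n))).
  eapply Rle_trans. apply bl_normD. rewrite S_INR.
  assert (nrm (psum X a xs n) <= INR n * B) by (apply IHn; intros; apply H; lia).
  specialize (H n ltac:(lia)). lra.
Qed.
Lemma abs_psum_le a (xs ys : nat -> X) b c n :
  (forall j, (j < n)%nat -> le (abs (scal (a j) (xs j))) (scal c (scal (b j) (ys j)))) ->
  le (abs (psum X a xs n)) (scal c (psum X b ys n)).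
Proof.
  induction n; intro H; simpl.
  - rewrite abs_zero, scal0r. apply bl_le_refl.
  - eapply bl_le_trans. apply abs_add. rewrite bl_scalDr. apply le_add2.
    apply IHn; intros; apply H; lia. apply H; lia.
Qed.

Lemma uconv_conv (s : nat -> X) l : u_conv X s l -> norm_conv X s l.
Proof.
  intros [w [Hw H]] eps He.
  destruct (H (eps / (nrm w + 1))) as [N HN].
  apply Rdiv_lt_0_compat; [lra|pose proof (bl_norm_ge0 X w); lra].
  exists N. intros n Hn. specialize (HN n Hn).
  apply nrm_le_abs in HN. rewrite bl_normZ in HN.
  pose proof (bl_norm_ge0 X w).
  assert (0 < eps / (nrm w + 1)) by (apply Rdiv_lt_0_compat; lra).
  rewrite Rabs_pos_eq in HN by lra.
  eapply Rle_lt_trans. apply HN.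
  apply Rlt_le_trans with ((eps / (nrm w + 1)) * (nrm w + 1)). nra.
  right. field. lra.
Qed.

End An.

Section Baire.
Variable X : BanachLattice.
Local Notation add := (bl_add X).
Local Notation opp := (bl_opp X).
Local Notation scal := (bl_scal X).
Local Notation nrm := (bl_norm X).
Local Notation le := (bl_le X).
Local Notation zero := (bl_zero X).
Local Notation sub := (bsub X).
Local Notation abs := (babs X).

Fixpoint bseq (g : nat * X * R -> X * R) (k : nat) : X * R :=
  match k with
  | O => (zero, 1)
  | S k' => g (k', fst (bseq g k'), snd (bseq g k'))
  end.

Lemma baire (F : nat -> X -> Prop) :
  (forall k x, (forall eps, eps > 0 -> exists y, F k y /\ nrm (sub x y) < eps) -> F k x) ->
  (forall x, exists k, F k x) ->
  exists k c r, r > 0 /\ forall x, nrm (sub x c) < r -> F k x.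
Proof.
  intros Hcl Hcov. apply NNPP. intro Hno.
  assert (Hstep : forall k c r, r > 0 -> exists c' r', 0 < r' /\ r' <= r/2 /\
            nrm (sub c' c) <= r/2 /\ forall z, nrm (sub z c') <= r' -> ~ F k z).
  { intros k c r Hr.
    assert (Hx : exists x, nrm (sub x c) < r/2 /\ ~ F k x).
    { apply NNPP; intro H. apply Hno. exists k, c, (r/2). split. lra.
      intros x Hx. apply NNPP. intro Hf. apply H. exists x; auto. }
    destruct Hx as [x [Hx Hf]].
    assert (He : exists eps, eps > 0 /\ forall y, F k y -> nrm (sub x y) >= eps).
    { apply NNPP; intro H. apply Hf, Hcl. intros eps He. apply NNPP; intro H2.
      apply H. exists eps. split; auto. intros y Hy. apply Rnot_lt_ge. intro Hl.
      apply H2. exists y; auto. }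
    destruct He as [eps [He Heps]].
    exists x, (Rmin (eps/2) (r/2)). split; [|split; [|split]].
    - apply Rmin_glb_lt; lra.
    - apply Rmin_r.
    - lra.
    - intros z Hz Hfz. specialize (Heps z Hfz). rewrite nrm_sub_sym in Heps.
      pose proof (Rmin_l (eps/2) (r/2)). lra. }
  destruct (choice (fun (t : nat * X * R) (o : X * R) =>
     snd t > 0 -> 0 < snd o /\ snd o <= snd t / 2 /\ nrm (sub (fst o) (snd (fst t))) <= snd t / 2 /\
        forall z, nrm (sub z (fst o)) <= snd o -> ~ F (fst (fst t)) z)) as [g Hg].
  { intros [[k c] r]. simpl. destruct (Rlt_dec 0 r) as [Hr|Hr].
    - destruct (Hstep k c r Hr) as [c' [r' H]]. exists (c', r'). simpl. auto.
    - exists (zero, 0). intro. lra. }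
  set (c := fun k => fst (bseq g k)). set (r := fun k => snd (bseq g k)).
  assert (Hs : forall k, 0 < r k /\ r (S k) <= r k / 2 /\ nrm (sub (c (S k)) (c k)) <= r k / 2 /\
        forall z, nrm (sub z (c (S k))) <= r (S k) -> ~ F k z).
  { induction k.
    - unfold c, r; simpl. specialize (Hg (0%nat, zero, 1)). simpl in Hg. split. lra. apply Hg. lra.
    - destruct IHk as [H1 [H2 _]].
      assert (Hp : 0 < r (S k)) by (destruct (Hg (k, c k, r k)) as [Hq _]; simpl; auto).
      split; auto. unfold c, r. simpl. specialize (Hg (S k, c (S k), r (S k))). simpl in Hg.
      apply Hg. auto. }
  assert (Hr : forall k, r k <= (/2)^k).
  { induction k. unfold r; simpl; lra. destruct (Hs k) as [_ [H _]]. rewrite half_pow_S. lra. }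
  assert (Ht : forall n d, nrm (sub (c (n + d)%nat) (c n)) <= r n - r (n + d)%nat).
  { intros n d. induction d.
    - rewrite Nat.add_0_r, sub_diag, nrm0. lra.
    - rewrite Nat.add_succ_r. eapply Rle_trans. apply (nrm_tri X _ (c (n+d)%nat)).
      destruct (Hs (n+d)%nat) as [_ [H1 [H2 _]]]. lra. }
  destruct (geom_conv X c (/2)) as [l [Hl _]].
  { intro n. destruct (Hs n) as [_ [_ [H _]]]. specialize (Hr n). lra. }
  destruct (Hcov l) as [k Hk].
  assert (Hb : nrm (sub l (c (S k))) <= r (S k)).
  { apply (conv_le X c l _ _ (S k) Hl). intros m Hm.
    replace m with (S k + (m - S k))%nat by lia. eapply Rle_trans. apply Ht.
    destruct (Hs (S k + (m - S k))%nat) as [H _]. lra. }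
  destruct (Hs k) as [_ [_ [_ H]]]. apply (H l Hb Hk).
Qed.

End Baire.

Lemma prod3_nonneg a b c : 0 <= a -> 0 <= b -> 0 <= c -> 0 <= a * 4 * b * c.
Proof. intros. apply Rmult_le_pos; auto. apply Rmult_le_pos; auto. lra. Qed.

Section Basis.
Variable X : BanachLattice.
Local Notation add := (bl_add X).
Local Notation opp := (bl_opp X).
Local Notation scal := (bl_scal X).
Local Notation nrm := (bl_norm X).
Local Notation le := (bl_le X).
Local Notation zero := (bl_zero X).
Local Notation sub := (bsub X).
Local Notation abs := (babs X).

Variable e : nat -> X.
Variable coef : X -> nat -> R.
Hypothesis Hconv : forall x, norm_conv X (psum X (coef x) e) x.
Hypothesis Huniq : forall x b, norm_conv X (psum X b e) x -> b = coef x.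

Definition Pn n x := psum X (coef x) e n.

Lemma coef_add x y : coef (add x y) = fun j => coef x j + coef y j.
Proof.
  symmetry. apply Huniq. eapply conv_ext. intro n. symmetry. apply psum_add.
  apply conv_add; auto.
Qed.
Lemma coef_scal c x : coef (scal c x) = fun j => c * coef x j.
Proof.
  symmetry. apply Huniq. eapply conv_ext. intro n. symmetry. apply psum_scal.
  apply conv_scal; auto.
Qed.
Lemma coef_sub x y : coef (sub x y) = fun j => coef x j - coef y j.
Proof.
  unfold bsub. rewrite <- scalN1, coef_add, coef_scal.
  apply functional_extensionality. intro. ring.
Qed.
Lemma Pn_sub n x y : Pn n (sub x y) = sub (Pn n x) (Pn n y).
Proof. unfold Pn. rewrite coef_sub. apply psum_sub. Qed.
Lemma Pn_add n x y : Pn n (add x y) = add (Pn n x) (Pn n y).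
Proof. unfold Pn. rewrite coef_add. apply psum_add. Qed.
Lemma Pn_scal n c x : Pn n (scal c x) = scal c (Pn n x).
Proof. unfold Pn. rewrite coef_scal. apply psum_scal. Qed.
Lemma coef_zero : coef zero = fun _ => 0.
Proof.
  symmetry. apply Huniq. intros eps He. exists O. intros n _.
  rewrite psum_zero, sub_diag, nrm0. lra.
Qed.
Lemma Pn_zero n : Pn n zero = zero.
Proof. unfold Pn. rewrite coef_zero. apply psum_zero. Qed.

Lemma e_nz j : 0 < nrm (e j).
Proof.
  destruct (Rlt_le_dec 0 (nrm (e j))) as [H|H]; auto. exfalso.
  assert (Hz : e j = zero) by (apply bl_norm_eq0; pose proof (bl_norm_ge0 X (e j)); lra).
  set (b := fun k => if Nat.eq_dec k j then 1 else 0).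
  assert (Hb : forall n, psum X b e n = zero).
  { induction n; simpl; auto. rewrite IHn, add0l. unfold b.
    destruct (Nat.eq_dec n j). subst. rewrite Hz. apply scal0r. apply scal0l. }
  assert (b = coef zero).
  { apply Huniq. intros eps He. exists O. intros n _. rewrite Hb, sub_diag, nrm0. lra. }
  rewrite coef_zero in H0. apply (f_equal (fun f => f j)) in H0. unfold b in H0.
  destruct (Nat.eq_dec j j); [lra|congruence].
Qed.

Lemma Pn_S_sub n x : sub (Pn (S n) x) (Pn n x) = scal (coef x n) (e n).
Proof. apply psum_S_sub. Qed.

Lemma sub_sub_r x p : sub x (sub x p) = p.
Proof.
  unfold bsub. rewrite oppD, oppK, bl_addA, bl_addN, add0l. auto.
Qed.

Lemma Bd_exists x : exists k, forall n, nrm (Pn n x) <= k.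
Proof.
  destruct (Hconv x 1) as [N HN]. lra.
  assert (Hm : forall m, exists k, forall n, (n < m)%nat -> nrm (Pn n x) <= k).
  { induction m. exists 0. intros; lia.
    destruct IHm as [k Hk]. exists (Rmax k (nrm (Pn m x))). intros n Hn.
    destruct (Nat.eq_dec n m). subst. apply Rmax_r.
    eapply Rle_trans. apply Hk. lia. apply Rmax_l. }
  destruct (Hm N) as [k Hk]. exists (Rmax k (nrm x + 1)). intro n.
  destruct (Nat.lt_ge_cases n N).
  - eapply Rle_trans. apply Hk; auto. apply Rmax_l.
  - eapply Rle_trans; [|apply Rmax_r]. specialize (HN n H).
    rewrite <- (sub_sub_r x (Pn n x)). eapply Rle_trans. apply nrm_sub_le.
    unfold Pn in *. lra.
Qed.

Fixpoint iterX (f : X -> X) (y : X) (i : nat) : X :=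
  match i with O => y | S i' => f (iterX f y i') end.

Lemma sub_sub_add y w z : sub y (sub w z) = add (sub y w) z.
Proof. unfold bsub. rewrite oppD, oppK, bl_addA. auto. Qed.

Definition Bd k x := forall n, nrm (Pn n x) <= k.
Definition Fb k x := forall eps, eps > 0 -> exists y, Bd (INR k) y /\ nrm (sub x y) < eps.

Lemma Pn_bounded : exists K, 0 <= K /\ forall n x, nrm (Pn n x) <= K * nrm x.
Proof.
  destruct (baire X Fb) as [k [c [r [Hr Hball]]]].
  { intros k x Hx eps He. destruct (Hx (eps/2)) as [y [Hy Hxy]]. lra.
    destruct (Hy (eps/2)) as [z [Hz Hyz]]. lra. exists z. split; auto.
    eapply Rle_lt_trans. apply (nrm_tri X x y z). lra. }
  { intro x. destruct (Bd_exists x) as [k Hk].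
    destruct (INR_unbounded k) as [m Hm]. exists m. intros eps He. exists x. split.
    intro n. specialize (Hk n). lra. rewrite sub_diag, nrm0. lra. }
  set (kk := INR k). assert (Hk0 : 0 <= kk) by apply pos_INR.
  assert (C1 : forall y, nrm y < r -> forall eps, eps > 0 -> exists z, Bd (2*kk) z /\ nrm (sub y z) < eps).
  { intros y Hy eps He.
    assert (Hcy : Fb k (add c y)) by (apply Hball; rewrite (bl_addC _ c y), sub_add_l; auto).
    destruct (Hcy (eps/2)) as [u [Hu Hcu]]. lra.
    assert (Hc : Fb k c) by (apply Hball; rewrite sub_diag, nrm0; lra).
    destruct (Hc (eps/2)) as [v [Hv Hcv]]. lra.
    exists (sub u v). split.
    - intro n. rewrite Pn_sub. eapply Rle_trans. apply nrm_sub_le.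
      specialize (Hu n); specialize (Hv n). fold kk in Hu, Hv. lra.
    - replace (sub y (sub u v)) with (sub (sub (add c y) u) (sub c v)).
      eapply Rle_lt_trans. apply nrm_sub_le. lra.
      rewrite subBB, (bl_addC _ c y), sub_add_l. auto. }
  set (M := 4 * kk / r).
  assert (HM : 0 <= M) by (unfold M; apply Rmult_le_pos; [lra|left; apply Rinv_0_lt_compat; lra]).
  assert (C2 : forall y, exists z, Bd (M * nrm y) z /\ nrm (sub y z) <= nrm y / 2).
  { intro y. destruct (Req_dec (nrm y) 0) as [H0|H0].
    - exists zero. apply bl_norm_eq0 in H0. subst y. split.
      + intro n. rewrite Pn_zero, nrm0. lra.
      + rewrite sub_diag, nrm0. lra.
    - assert (Hny : 0 < nrm y) by (pose proof (bl_norm_ge0 X y); lra).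
      set (sc := r / (2 * nrm y)). assert (Hsc : 0 < sc) by (unfold sc; apply Rdiv_lt_0_compat; lra).
      destruct (C1 (scal sc y)) with (eps := r/4) as [z' [Hz' Hyz]].
      { rewrite bl_normZ, Rabs_pos_eq by lra. unfold sc. field_simplify; lra. }
      lra.
      exists (scal (/sc) z'). split.
      + intro n. rewrite Pn_scal, bl_normZ, Rabs_pos_eq.
        2: left; apply Rinv_0_lt_compat; auto.
        specialize (Hz' n). replace (M * nrm y) with (/ sc * (2 * kk)).
        apply Rmult_le_compat_l; auto. left; apply Rinv_0_lt_compat; auto.
        unfold M, sc. field. lra.
      + replace y with (scal (/sc) (scal sc y)) at 1.
        rewrite <- scal_sub, bl_normZ, Rabs_pos_eq.
        2: left; apply Rinv_0_lt_compat; auto.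
        apply Rle_trans with (/sc * (r/4)).
        apply Rmult_le_compat_l. left; apply Rinv_0_lt_compat; auto. lra.
        right. unfold sc. field. lra.
        rewrite bl_scalA, Rinv_l, bl_scal1; auto. lra. }
  destruct (choice (fun y z => Bd (M * nrm y) z /\ nrm (sub y z) <= nrm y / 2) C2) as [zf Hzf].
  exists (2 * M). split. lra.
  intros n0 y.
  set (ny := nrm y). assert (Hny : 0 <= ny) by apply bl_norm_ge0.
  set (yy := iterX (fun w => sub w (zf w)) y).
  assert (Hyy : forall i, nrm (yy i) <= (/2)^i * ny).
  { induction i. unfold yy; simpl. unfold ny. lra.
    change (yy (S i)) with (sub (yy i) (zf (yy i))). destruct (Hzf (yy i)) as [_ H].
    rewrite half_pow_S. lra. }
  set (Z := fun m => sub y (yy m)).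
  assert (HZS : forall m, Z (S m) = add (Z m) (zf (yy m))).
  { intro m. unfold Z. change (yy (S m)) with (sub (yy m) (zf (yy m))). apply sub_sub_add. }
  assert (HPZ : forall n m, nrm (sub (Pn n (Z (S m))) (Pn n (Z m))) <= (M * ny) * (/2)^m).
  { intros n m. rewrite HZS, Pn_add, (bl_addC _ (Pn n (Z m))), sub_add_l.
    destruct (Hzf (yy m)) as [H _]. eapply Rle_trans. apply H.
    specialize (Hyy m). pose proof (half_pow_pos m). nra. }
  assert (HZ0 : forall n, Pn n (Z 0%nat) = zero).
  { intro n. unfold Z. change (yy 0%nat) with y. rewrite sub_diag. apply Pn_zero. }
  assert (HPZb : forall n m, nrm (Pn n (Z m)) <= 2 * M * ny).
  { intros n m. pose proof (geom_le X (fun m => Pn n (Z m)) (M * ny) (HPZ n) 0 m ltac:(lia)).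
    simpl in H. rewrite HZ0, sub0r in H. lra. }
  assert (Hcz : forall j m, Rabs (coef (Z (S m)) j - coef (Z m) j) <= (2 * M * ny / nrm (e j)) * (/2)^m).
  { intros j m. rewrite HZS, coef_add.
    replace (coef (Z m) j + coef (zf (yy m)) j - coef (Z m) j) with (coef (zf (yy m)) j) by ring.
    pose proof (e_nz j) as Hej.
    assert (Rabs (coef (zf (yy m)) j) * nrm (e j) <= 2 * M * ny * (/2)^m).
    { rewrite <- bl_normZ, <- Pn_S_sub. eapply Rle_trans. apply nrm_sub_le.
      destruct (Hzf (yy m)) as [H _]. pose proof (H (S j)). pose proof (H j).
      specialize (Hyy m). pose proof (half_pow_pos m). nra. }
    apply Rmult_le_reg_r with (nrm (e j)); auto.
    replace (2 * M * ny / nrm (e j) * (/ 2) ^ m * nrm (e j)) with (2 * M * ny * (/2)^m)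
      by (field; lra). auto. }
  destruct (choice (fun j l => Un_cv (fun m => coef (Z m) j) l /\
     forall m, Rabs (l - coef (Z m) j) <= 2 * (2 * M * ny / nrm (e j)) * (/2)^m)) as [b Hb].
  { intro j. apply geom_conv_R. intro m. apply Hcz. }
  assert (Hfix : forall n m, nrm (sub (psum X b e n) (Pn n (Z m))) <= INR n * (4 * M * ny * (/2)^m)).
  { intros n m. unfold Pn. rewrite <- psum_sub. apply nrm_psum_le. intros j _.
    rewrite bl_normZ. destruct (Hb j) as [_ H]. specialize (H m).
    pose proof (e_nz j).
    apply Rle_trans with (2 * (2 * M * ny / nrm (e j)) * (/ 2) ^ m * nrm (e j)).
    apply Rmult_le_compat_r; lra. right. field. lra. }
  assert (Hcv : forall n, norm_conv X (fun m => Pn n (Z m)) (psum X b e n)).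
  { intros n eps He. destruct (half_pow_small (eps / (INR n * 4 * M * ny + 1))) as [N HN].
    apply Rdiv_lt_0_compat. lra. pose proof (pos_INR n). 
    assert (0 <= INR n * 4 * M * ny) by (apply prod3_nonneg; auto; apply pos_INR). lra.
    exists N. intros m Hm. eapply Rle_lt_trans. apply Hfix.
    specialize (HN m Hm). pose proof (pos_INR n).
    assert (0 <= INR n * 4 * M * ny) by (apply prod3_nonneg; auto; apply pos_INR).
    apply Rmult_lt_compat_l with (r := INR n * 4 * M * ny + 1) in HN; [|lra].
    replace ((INR n * 4 * M * ny + 1) * (eps / (INR n * 4 * M * ny + 1))) with eps in HN
      by (field; lra).
    pose proof (half_pow_pos m). nra. }
  assert (Hunif : forall n m, nrm (sub (psum X b e n) (Pn n (Z m))) <= 2 * (M * ny) * (/2)^m).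
  { intros n m. apply (conv_le X _ _ _ _ m (Hcv n)). intros m' Hm'.
    apply (geom_le X (fun m => Pn n (Z m)) (M * ny) (HPZ n)). lia. }
  assert (Hbd : forall n, nrm (psum X b e n) <= 2 * M * ny).
  { intro n. rewrite <- (sub0r X (psum X b e n)). apply (conv_le X _ _ _ _ 0 (Hcv n)).
    intros m _. rewrite sub0r. apply HPZb. }
  assert (Hconvb : norm_conv X (psum X b e) y).
  { intros eps He. destruct (half_pow_small (eps / (3 * (2 * M * ny + ny + 1)))) as [m Hm].
    apply Rdiv_lt_0_compat; [lra|nra].
    specialize (Hm m (le_n m)).
    destruct (Hconv (Z m) (eps/3)) as [N HN]. lra.
    exists N. intros n Hn.
    eapply Rle_lt_trans. apply (nrm_tri X y (Z m)).
    eapply Rle_lt_trans. apply Rplus_le_compat_l. apply (nrm_tri X (Z m) (Pn n (Z m))).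
    assert (E1 : sub y (Z m) = yy m) by (unfold Z; apply sub_sub_r). rewrite E1.
    specialize (HN n Hn). fold (Pn n (Z m)) in HN.
    specialize (Hyy m). specialize (Hunif n m). rewrite nrm_sub_sym in Hunif.
    apply Rmult_lt_compat_l with (r := 3 * (2 * M * ny + ny + 1)) in Hm; [|nra].
    replace (3 * (2 * M * ny + ny + 1) * (eps / (3 * (2 * M * ny + ny + 1)))) with eps in Hm
      by (field; nra).
    pose proof (half_pow_pos m). nra. }
  apply Huniq in Hconvb. unfold Pn. rewrite <- Hconvb. apply Hbd.
Qed.

Lemma coef_bound j : exists C, forall x, Rabs (coef x j) <= C * nrm x.
Proof.
  destruct Pn_bounded as [K [HK HP]]. pose proof (e_nz j).
  exists (2 * K / nrm (e j)). intro x.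
  apply Rmult_le_reg_r with (nrm (e j)); auto.
  replace (2 * K / nrm (e j) * nrm x * nrm (e j)) with (K * nrm x + K * nrm x) by (field; lra).
  rewrite <- bl_normZ, <- Pn_S_sub. eapply Rle_trans. apply nrm_sub_le.
  pose proof (HP (S j) x). pose proof (HP j x). lra.
Qed.

Lemma coef_dual j : in_dual X (fun x => coef x j).
Proof.
  split; [|split].
  - intros x y. rewrite coef_add. auto.
  - intros c x. rewrite coef_scal. auto.
  - apply coef_bound.
Qed.

End Basis.

Lemma basis_dual (X : BanachLattice) (e : nat -> X) : schauder_basis X e ->
  exists a : nat -> X -> R, (forall j, in_dual X (a j)) /\
     (forall x, norm_conv X (psum X (fun j => a j x) e) x).
Proof.
  intro Hb.
  destruct (choice (fun x c => norm_conv X (psum X c e) x /\ forall b, norm_conv X (psum X b e) x -> c = b)) as [coef Hc].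
  { intro x. destruct (Hb x) as [c [H1 H2]]. exists c. split; auto. }
  exists (fun j x => coef x j). split.
  - intro j. apply (coef_dual X e coef).
    intro x; apply Hc. intros x b H. symmetry. apply Hc; auto.
  - intro x. apply Hc.
Qed.

Section Lists.
Variable X : BanachLattice.
Local Notation add := (bl_add X).
Local Notation opp := (bl_opp X).
Local Notation scal := (bl_scal X).
Local Notation nrm := (bl_norm X).
Local Notation le := (bl_le X).
Local Notation zero := (bl_zero X).
Local Notation sub := (bsub X).
Local Notation abs := (babs X).

Definition item := ((X -> R) * X)%type.

Fixpoint lsum (L : list item) (x : X) : X :=
  match L with
  | [] => zero
  | it :: L' => add (scal (fst it x) (snd it)) (lsum L' x)
  end.

Definition scl (c : R) (L : list item) : list item :=
  map (fun it => ((fun x => c * fst it x), snd it)) L.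

Lemma lsum_app L1 L2 x : lsum (L1 ++ L2) x = add (lsum L1 x) (lsum L2 x).
Proof.
  induction L1; simpl. rewrite add0l; auto. rewrite IHL1, bl_addA. auto.
Qed.

Lemma lsum_scl c L x : lsum (scl c L) x = scal c (lsum L x).
Proof.
  induction L; simpl. rewrite scal0r; auto.
  rewrite IHL, bl_scalDr, bl_scalA. auto.
Qed.

Lemma lsum_repeat k L x : lsum (concat (repeat L k)) x = scal (INR k) (lsum L x).
Proof.
  induction k. simpl. rewrite scal0l; auto.
  simpl concat. rewrite lsum_app, IHk, S_INR, bl_scalDl, bl_scal1, bl_addC. auto.
Qed.

Lemma lincomb_lsum (f : X -> R) (l : list (R * X)) x :
  lsum (map (fun p => ((fun y => fst p * f y), snd p)) l) x = scal (f x) (lincomb X l).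
Proof.
  induction l as [|[c v] l IH]; simpl. rewrite scal0r; auto.
  rewrite IH, bl_scalDr, bl_scalA, Rmult_comm. auto.
Qed.

Lemma firstn_repeat k (L : list item) p : exists r p', (r <= k)%nat /\
  firstn p (concat (repeat L k)) = concat (repeat L r) ++ firstn p' L.
Proof.
  revert p. induction k; intro p.
  - exists O, O. simpl. rewrite firstn_nil. auto.
  - simpl concat. rewrite firstn_app.
    destruct (Nat.le_gt_cases p (length L)).
    + exists O, p. split. lia. replace (p - length L)%nat with O by lia. simpl.
      rewrite app_nil_r. auto.
    + destruct (IHk (p - length L)%nat) as [r [p' [Hr Hp]]].
      exists (S r), p'. split. lia. rewrite Hp, firstn_all2 by lia. simpl.
      rewrite app_assoc. auto.
Qed.

Lemma firstn_S_nth (L : list item) p d : (p < length L)%nat ->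
  firstn (S p) L = firstn p L ++ [nth p L d].
Proof.
  revert p. induction L; intros p Hp; simpl in Hp. lia.
  destruct p. reflexivity.
  change (a :: firstn (S p) L = (a :: firstn p L) ++ [nth p L d]).
  rewrite IHL by lia. reflexivity.
Qed.

Lemma abs_sub_le a b : le (abs (sub a b)) (add (abs a) (abs b)).
Proof. unfold bsub. rewrite <- (abs_opp X b). apply abs_add. Qed.

Lemma dual_scale c f : in_dual X f -> in_dual X (fun x => c * f x).
Proof.
  intros [H1 [H2 [C H3]]]. split; [|split].
  - intros x y. rewrite H1. ring.
  - intros a x. rewrite H2. ring.
  - exists (Rabs c * C). intro x. rewrite Rabs_mult, Rmult_assoc.
    apply Rmult_le_compat_l. apply Rabs_pos. auto.
Qed.

Lemma dual_zero : in_dual X (fun _ => 0).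
Proof.
  split; [|split]. intros; ring. intros; ring. exists 0. intro. rewrite Rabs_R0. lra.
Qed.

Lemma dual_bound f : in_dual X f -> exists C, 0 <= C /\ forall x, Rabs (f x) <= C * nrm x.
Proof.
  intros [_ [_ [C H]]]. exists (Rabs C). split. apply Rabs_pos. intro x.
  eapply Rle_trans. apply H. apply Rmult_le_compat_r. apply bl_norm_ge0. apply RRle_abs.
Qed.

Definition good (D : X -> Prop) (it : item) := in_dual X (fst it) /\ D (snd it).

Lemma prefix_weight D (L : list item) : Forall (good D) L ->
  exists u, le zero u /\ forall x p, le (abs (lsum (firstn p L) x)) (scal (nrm x) u).
Proof.
  induction L as [|[f d] L IH]; intro HL.
  - exists zero. split. apply bl_le_refl. intros x p. rewrite firstn_nil. simpl.
    rewrite abs_zero, scal0r. apply bl_le_refl.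
  - inversion HL as [|? ? [Hf Hd] HL']; subst. destruct (IH HL') as [u [Hu H]].
    destruct (dual_bound f Hf) as [C [HC Hb]].
    exists (add (scal C (abs d)) u). split.
    apply add_nonneg; auto. apply scal_nonneg; auto. apply abs_nonneg.
    intros x p. destruct p.
    + simpl. rewrite abs_zero. apply scal_nonneg. apply bl_norm_ge0.
      apply add_nonneg; auto. apply scal_nonneg; auto. apply abs_nonneg.
    + simpl firstn. simpl lsum. eapply bl_le_trans. apply abs_add.
      rewrite bl_scalDr. apply le_add2; [|apply H].
      eapply bl_le_trans. apply abs_scal. rewrite bl_scalA.
      apply scal_mono. apply abs_nonneg. simpl. rewrite Rmult_comm. apply Hb.
Qed.

End Lists.

Section Reg.
Variable X : BanachLattice.
Local Notation add := (bl_add X).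
Local Notation opp := (bl_opp X).
Local Notation scal := (bl_scal X).
Local Notation nrm := (bl_norm X).
Local Notation le := (bl_le X).
Local Notation zero := (bl_zero X).
Local Notation sub := (bsub X).
Local Notation abs := (babs X).

Lemma two_half n : 2 ^ n * (/2) ^ n = 1.
Proof. rewrite <- Rpow_mult_distr. replace (2 * /2) with 1 by field. apply pow1. Qed.

Lemma regulator (v : nat -> X) : (forall n, le zero (v n)) ->
  (forall n, nrm (v n) <= 2 * (/4)^n) ->
  exists W, le zero W /\ forall n, le (v n) (scal ((/2)^n) W).
Proof.
  intros Hv Hn. set (s := psum X (fun k => 2^k) v).
  assert (Hs : forall m, nrm (sub (s (S m)) (s m)) <= 2 * (/2)^m).
  { intro m. unfold s. rewrite psum_S_sub, bl_normZ, Rabs_pos_eq by (apply pow_le; lra).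
    specialize (Hn m). replace ((/2)^m) with (2^m * (/4)^m).
    pose proof (pow_le 2 m ltac:(lra)). nra.
    rewrite <- Rpow_mult_distr. f_equal. field. }
  destruct (geom_conv X s 2 Hs) as [W [HW _]].
  assert (Hs0 : forall m, le zero (s m)).
  { induction m. apply bl_le_refl. unfold s; simpl. fold (s m).
    apply add_nonneg; auto. apply scal_nonneg; auto. apply pow_le; lra. }
  assert (Hsn : forall n k, le (scal (2^n) (v n)) (s (k + S n)%nat)).
  { intros n k. induction k.
    - simpl. unfold s. simpl. fold (s n). rewrite bl_addC. apply le_add_r; auto.
    - eapply bl_le_trans. apply IHk. rewrite Nat.add_succ_l. unfold s at 2. simpl.
      fold (s (k + S n)%nat). apply le_add_r. apply scal_nonneg; auto. apply pow_le; lra. }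
  exists W. split. apply (cone_closed X s W Hs0 HW).
  intro n. 
  assert (Hc : le zero (sub W (scal (2^n) (v n)))).
  { apply (cone_closed X (fun k => sub (s (k + S n)%nat) (scal (2^n) (v n)))).
    intro k. apply le_sub0. auto.
    intros eps He. destruct (HW eps He) as [N HN]. exists N. intros k Hk.
    rewrite subBB, sub_diag, sub0r. apply HN. lia. }
  apply le_sub0_inv in Hc. apply (bl_le_scal X ((/2)^n)) in Hc.
  rewrite bl_scalA, Rmult_comm, two_half, bl_scal1 in Hc. auto.
  left. apply pow_lt. lra.
Qed.

Variable lc : nat -> list (item X).
Variable dflt : item X.
Hypothesis Hdflt : forall x, fst dflt x = 0.

Fixpoint state (i : nat) : nat * nat :=
  match i with
  | O => (O, O)
  | S i' => let (c, p) := state i' in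
            if Nat.ltb (S p) (length (lc c)) then (c, S p) else (S c, O)
  end.

Definition fitem (i : nat) : item X := nth (snd (state i)) (lc (fst (state i))) dflt.

Fixpoint csum (C : nat) (x : X) : X :=
  match C with
  | O => zero
  | S C' => add (csum C' x) (lsum X (lc C') x)
  end.

Lemma state_inv i : (snd (state i) < length (lc (fst (state i))) \/ snd (state i) = O)%nat.
Proof.
  induction i. simpl. auto. simpl. destruct (state i) as [c p]. simpl in *.
  destruct (Nat.ltb_spec (S p) (length (lc c))); simpl; auto.
Qed.

Lemma frame_psum x i : psum X (fun j => fst (fitem j) x) (fun j => snd (fitem j)) i =
  add (csum (fst (state i)) x) (lsum X (firstn (snd (state i)) (lc (fst (state i)))) x).
Proof.
  induction i. simpl. rewrite bl_add0. auto.
  simpl psum. rewrite IHi. unfold fitem at 1 2. pose proof (state_inv i) as Hinv.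
  simpl state. destruct (state i) as [c p]. simpl in *.
  destruct (Nat.ltb_spec (S p) (length (lc c))); cbn [fst snd].
  - rewrite (firstn_S_nth X _ _ dflt) by lia. rewrite lsum_app. simpl.
    rewrite bl_add0, bl_addA. auto.
  - change (firstn 0 (lc (S c))) with (@nil (item X)). cbn [lsum csum].
    rewrite bl_add0, <- bl_addA. f_equal.
    destruct (Nat.lt_ge_cases p (length (lc c))) as [Hl|Hge].
    + assert (S p = length (lc c)) by lia.
      assert (E : lsum X (lc c) x = add (lsum X (firstn p (lc c)) x)
          (scal (fst (nth p (lc c) dflt) x) (snd (nth p (lc c) dflt)))).
      { rewrite <- (firstn_all (lc c)) at 1. rewrite <- H0.
        rewrite (firstn_S_nth X _ _ dflt) by lia. rewrite lsum_app. simpl.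
        rewrite bl_add0. auto. }
      rewrite E. auto.
    + assert (p = O) by (destruct Hinv; lia). subst p.
      destruct (lc c) as [|it L] eqn:E.
      * simpl. rewrite Hdflt, scal0l, bl_add0. auto.
      * simpl in Hge. lia.
Qed.

Lemma state_mono i k : (fst (state i) <= fst (state (i + k)))%nat.
Proof.
  induction k. rewrite Nat.add_0_r. lia.
  rewrite Nat.add_succ_r. simpl. destruct (state (i + k)) as [c p]. simpl in *.
  destruct (Nat.ltb (S p) (length (lc c))); simpl; lia.
Qed.

Lemma state_progress d i : (length (lc (fst (state i))) - snd (state i) <= d)%nat ->
  exists i', (fst (state i) < fst (state i'))%nat.
Proof.
  revert i. induction d; intros i Hd.
  - exists (S i). simpl. destruct (state i) as [c p]. simpl in *.
    destruct (Nat.ltb_spec (S p) (length (lc c))); simpl. lia. lia.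
  - destruct (Nat.ltb (S (snd (state i))) (length (lc (fst (state i))))) eqn:E.
    + apply Nat.ltb_lt in E.
      destruct (IHd (S i)) as [i' Hi'].
      { simpl. destruct (state i) as [c p]. simpl in *.
        rewrite (proj2 (Nat.ltb_lt _ _) E). simpl. lia. }
      exists i'. simpl in Hi'. destruct (state i) as [c p]. simpl in *.
      rewrite (proj2 (Nat.ltb_lt _ _) E) in Hi'. simpl in Hi'. auto.
    + exists (S i). simpl. destruct (state i) as [c p]. simpl in *. rewrite E. simpl. lia.
Qed.

Lemma state_unbounded N : exists I, forall i, (i >= I)%nat -> (fst (state i) >= N)%nat.
Proof.
  assert (H : forall N, exists I, (fst (state I) >= N)%nat).
  { clear N. intro N. induction N. exists O. lia. destruct IHN as [I HI].
    destruct (state_progress _ I (le_n _)) as [i' Hi']. exists i'. lia. }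
  destruct (H N) as [I HI]. exists I. intros i Hi.
  replace i with (I + (i - I))%nat by lia. pose proof (state_mono I (i - I)). lia.
Qed.

End Reg.

Section Constr.
Variable X : BanachLattice.
Local Notation add := (bl_add X).
Local Notation opp := (bl_opp X).
Local Notation scal := (bl_scal X).
Local Notation nrm := (bl_norm X).
Local Notation le := (bl_le X).
Local Notation zero := (bl_zero X).
Local Notation sub := (bsub X).
Local Notation abs := (babs X).

Variable e : nat -> X.
Variable a : nat -> X -> R.
Variable D : X -> Prop.
Hypothesis Ha : forall j, in_dual X (a j).
Variable C : nat -> R.
Hypothesis HC : forall j, 0 <= C j /\ forall x, Rabs (a j x) <= C j * nrm x.
Variable l : nat -> nat -> list (R * X).
Hypothesis Hl : forall n j, Forall (fun p => D (snd p)) (l n j) /\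
   nrm (sub (e j) (lincomb X (l n j))) <= (/8)^n / ((C j + 1) * (INR n + 1)).

Definition z n j := lincomb X (l n j).
Definition tol j (L : list (R * X)) : list (item X) :=
  map (fun p => ((fun y => fst p * a j y), snd p)) L.
Definition LAk N k := concat (map (fun j => tol j (l N j)) (seq 0 k)).
Definition LA n := LAk n n.
Definition A n x := lsum X (LA n) x.
Definition LB n := LA (S n) ++ scl X (-1) (LA n).
Definition T n x := sub (A (S n) x) (A n x).
Definition V n := psum X C (fun j => abs (sub (e j) (z n j))) n.

Lemma LAk_sum N k x : lsum X (LAk N k) x = psum X (fun j => a j x) (z N) k.
Proof.
  induction k. reflexivity.
  unfold LAk. rewrite seq_S, map_app, concat_app, lsum_app. fold (LAk N k).
  rewrite IHk. simpl. rewrite app_nil_r. unfold tol. rewrite lincomb_lsum. auto.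
Qed.

Lemma A_eq n x : A n x = psum X (fun j => a j x) (z n) n.
Proof. apply LAk_sum. Qed.

Lemma A0 x : A 0 x = zero.
Proof. reflexivity. Qed.

Lemma LB_sum n x : lsum X (LB n) x = T n x.
Proof.
  unfold LB, T, A. rewrite lsum_app, lsum_scl, scalN1. reflexivity.
Qed.

Lemma P_A n x : le (abs (sub (psum X (fun j => a j x) e n) (A n x))) (scal (nrm x) (V n)).
Proof.
  rewrite A_eq, <- psum_vsub. unfold V. apply abs_psum_le. intros j _.
  eapply bl_le_trans. apply abs_scal. rewrite bl_scalA.
  apply scal_mono. apply abs_nonneg. destruct (HC j) as [_ H]. rewrite Rmult_comm. apply H.
Qed.

Lemma psum_nonneg (c : nat -> R) (ys : nat -> X) n :
  (forall j, 0 <= c j /\ le zero (ys j)) -> le zero (psum X c ys n).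
Proof.
  intro H. induction n. apply bl_le_refl. simpl. apply add_nonneg; auto.
  apply scal_nonneg; apply H.
Qed.

Lemma V_nonneg n : le zero (V n).
Proof. apply psum_nonneg. intro j. split. apply HC. apply abs_nonneg. Qed.

Lemma V_nrm n : nrm (V n) <= (/8)^n.
Proof.
  unfold V. eapply Rle_trans. apply (nrm_psum_le X _ _ _ ((/8)^n / (INR n + 1))).
  - intros j _. rewrite bl_normZ, nrm_abs. destruct (HC j) as [HCj _].
    rewrite Rabs_pos_eq by auto. destruct (Hl n j) as [_ H]. fold (z n j) in H.
    pose proof (pos_INR n). pose proof (pow_lt (/8) n ltac:(lra)).
    apply Rle_trans with (C j * ((/ 8) ^ n / ((C j + 1) * (INR n + 1)))).
    apply Rmult_le_compat_l; auto.
    apply Rle_trans with ((C j + 1) * ((/ 8) ^ n / ((C j + 1) * (INR n + 1)))).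
    apply Rmult_le_compat_r. apply Rlt_le, Rdiv_lt_0_compat; auto. nra. lra.
    right. field. lra.
  - pose proof (pos_INR n). pose proof (pow_lt (/8) n ltac:(lra)).
    apply Rle_trans with ((INR n + 1) * ((/ 8) ^ n / (INR n + 1))).
    apply Rmult_le_compat_r. apply Rlt_le, Rdiv_lt_0_compat; lra. lra.
    right. field. lra.
Qed.

Lemma good_LA n : Forall (good X D) (LA n).
Proof.
  apply Forall_forall. intros it Hit. unfold LA, LAk in Hit.
  apply in_concat in Hit. destruct Hit as [L [HL Hit]].
  apply in_map_iff in HL. destruct HL as [j [HLj _]]. subst L.
  unfold tol in Hit. apply in_map_iff in Hit. destruct Hit as [[c d] [Hcd Hin]]. subst it.
  split; simpl. apply dual_scale, Ha.
  destruct (Hl n j) as [HF _]. rewrite Forall_forall in HF. apply (HF _ Hin).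
Qed.

Lemma good_scl c L : Forall (good X D) L -> Forall (good X D) (scl X c L).
Proof.
  intro H. apply Forall_forall. intros it Hit. unfold scl in Hit.
  apply in_map_iff in Hit. destruct Hit as [[f d] [Hfd Hin]]. subst it.
  rewrite Forall_forall in H. destruct (H _ Hin) as [H1 H2]. split; simpl; auto.
  apply dual_scale; auto.
Qed.

Lemma good_LB n : Forall (good X D) (LB n).
Proof. apply Forall_app. split. apply good_LA. apply good_scl, good_LA. Qed.

Variable u : nat -> X.
Hypothesis Hu : forall n, le zero (u n) /\
   forall x p, le (abs (lsum X (firstn p (LB n)) x)) (scal (nrm x) (u n)).
Variable m : nat -> nat.
Hypothesis Hm : forall n, (1 <= m n)%nat /\ nrm (u n) <= INR (m n) * (/4)^n.

Definition lc n := concat (repeat (scl X (/ INR (m n)) (LB n)) (m n)).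
Definition v n := add (V n) (scal (/ INR (m n)) (u n)).

Lemma m_pos n : 0 < INR (m n).
Proof. destruct (Hm n) as [H _]. apply lt_0_INR. lia. Qed.

Lemma v_nonneg n : le zero (v n).
Proof.
  apply add_nonneg. apply V_nonneg. apply scal_nonneg. left; apply Rinv_0_lt_compat, m_pos.
  apply Hu.
Qed.

Lemma v_nrm n : nrm (v n) <= 2 * (/4)^n.
Proof.
  unfold v. eapply Rle_trans. apply bl_normD. rewrite bl_normZ.
  pose proof (m_pos n). rewrite Rabs_pos_eq by (left; apply Rinv_0_lt_compat; auto).
  pose proof (V_nrm n). assert ((/8)^n <= (/4)^n) by (apply pow_incr; lra).
  destruct (Hm n) as [_ H2].
  assert (/ INR (m n) * nrm (u n) <= (/4)^n).
  { apply Rmult_le_reg_l with (INR (m n)); auto. rewrite <- Rmult_assoc, Rinv_r by lra. lra. }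
  lra.
Qed.

Lemma lc_sum n x : lsum X (lc n) x = T n x.
Proof.
  unfold lc. rewrite lsum_repeat, lsum_scl, bl_scalA, Rinv_r, bl_scal1.
  apply LB_sum. pose proof (m_pos n). lra.
Qed.

Lemma csum_A n x : csum X lc n x = A n x.
Proof.
  induction n. reflexivity. simpl. rewrite IHn, lc_sum. unfold T.
  rewrite bl_addC. apply add_sub.
Qed.

Lemma good_lc n : Forall (good X D) (lc n).
Proof.
  apply Forall_forall. intros it Hit. unfold lc in Hit.
  apply in_concat in Hit. destruct Hit as [L [HL Hit]].
  apply repeat_spec in HL. subst L. pose proof (good_scl (/ INR (m n)) _ (good_LB n)).
  rewrite Forall_forall in H. auto.
Qed.

Lemma firstn_scl p c (L : list (item X)) : firstn p (scl X c L) = scl X c (firstn p L).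
Proof. apply firstn_map. Qed.

Lemma prefix_bound n p x :
  le (abs (lsum X (firstn p (lc n)) x)) (add (abs (T n x)) (scal (nrm x) (v n))).
Proof.
  unfold lc. destruct (firstn_repeat X (m n) (scl X (/ INR (m n)) (LB n)) p) as [r [p' [Hr Hp]]].
  rewrite Hp, lsum_app, lsum_repeat, firstn_scl, !lsum_scl, LB_sum.
  pose proof (m_pos n).
  eapply bl_le_trans. apply abs_add. apply le_add2.
  - rewrite bl_scalA. eapply bl_le_trans. apply abs_scal.
    apply bl_le_trans with (scal 1 (abs (T n x))); [|rewrite bl_scal1; apply bl_le_refl].
    apply scal_mono. apply abs_nonneg.
    rewrite Rabs_pos_eq. apply Rmult_le_reg_l with (INR (m n)); auto.
    rewrite <- Rmult_assoc, (Rmult_comm (INR (m n))), Rmult_assoc, Rinv_r by lra.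
    rewrite Rmult_1_r, Rmult_1_r. apply le_INR; auto.
    apply Rmult_le_pos. apply pos_INR. left; apply Rinv_0_lt_compat; auto.
  - eapply bl_le_trans. apply abs_scal. rewrite Rabs_pos_eq by (left; apply Rinv_0_lt_compat; auto).
    eapply bl_le_trans. apply bl_le_scal. left; apply Rinv_0_lt_compat; auto. apply Hu.
    rewrite bl_scalA, Rmult_comm, <- bl_scalA. apply bl_le_scal. apply bl_norm_ge0.
    unfold v. rewrite bl_addC. apply le_add_r. apply V_nonneg.
Qed.

Variable W : X.
Hypothesis HW : le zero W /\ forall n, le (v n) (scal ((/2)^n) W).
Hypothesis Hua : forall x, u_conv X (psum X (fun j => a j x) e) x.
Variable d0 : X.
Hypothesis Hd0 : D d0.

Definition dflt : item X := ((fun _ : X => 0), d0).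
Definition fxs i := snd (fitem X lc dflt i).
Definition ffs i := fst (fitem X lc dflt i).

Lemma four_G G : add G (add (add G G) G) = scal 4 G.
Proof.
  rewrite <- (bl_scal1 X G). rewrite <- !bl_scalDl, bl_scalA. f_equal. ring.
Qed.

Lemma sub_add_r x y p : sub x (add y p) = sub (sub x y) p.
Proof. unfold bsub. rewrite oppD, bl_addA. auto. Qed.

Lemma frame_uconv x : u_conv X (psum X (fun j => ffs j x) fxs) x.
Proof.
  destruct (Hua x) as [wP [HwP HP]]. set (nx := nrm x).
  assert (Hnx : 0 <= nx) by apply bl_norm_ge0.
  destruct HW as [HW0 HWv].
  exists (scal 4 (add wP (scal nx W))). split.
  { apply scal_nonneg. lra. apply add_nonneg; auto. apply scal_nonneg; auto. }
  intros eps He.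
  set (G := add (scal eps wP) (scal eps (scal nx W))).
  destruct (HP eps He) as [N1 HN1].
  destruct (half_pow_small eps He) as [N2 HN2].
  pose proof (Nat.le_max_l N1 N2) as HM1. pose proof (Nat.le_max_r N1 N2) as HM2.
  assert (Hv : forall n, (n >= N2)%nat -> le (scal nx (v n)) (scal eps (scal nx W))).
  { intros n Hn. rewrite bl_scalA, Rmult_comm, <- bl_scalA. apply bl_le_scal; auto.
    eapply bl_le_trans. apply HWv. apply scal_mono; auto. specialize (HN2 n Hn). lra. }
  assert (HvG : forall n, (n >= N2)%nat -> le (scal nx (v n)) G).
  { intros n Hn. eapply bl_le_trans. apply Hv; auto. unfold G. rewrite bl_addC.
    apply le_add_r. apply scal_nonneg; auto. lra. }
  assert (KA : forall n, (n >= max N1 N2)%nat -> le (abs (sub x (A n x))) G).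
  { intros n Hn. eapply bl_le_trans. apply (abs_tri X x (psum X (fun j => a j x) e n)).
    unfold G. apply le_add2. apply HN1. lia.
    eapply bl_le_trans. apply P_A. apply bl_le_trans with (scal nx (v n)); [|apply Hv; lia].
    apply bl_le_scal; auto. unfold v. apply le_add_r. apply scal_nonneg.
    left; apply Rinv_0_lt_compat, m_pos. apply Hu. }
  destruct (state_unbounded X lc (max N1 N2)) as [I HI].
  exists I. intros i Hi. unfold ffs, fxs.
  rewrite (frame_psum X lc dflt (fun _ => eq_refl) x i).
  specialize (HI i Hi). set (c := fst (state X lc i)) in *. set (p := snd (state X lc i)).
  rewrite csum_A, sub_add_r.
  rewrite bl_scalA, Rmult_comm, <- bl_scalA, bl_scalDr. fold G. rewrite <- four_G.
  eapply bl_le_trans. apply abs_sub_le. apply le_add2. apply KA; lia.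
  eapply bl_le_trans. apply prefix_bound. apply le_add2; [|apply HvG; lia].
  unfold T. eapply bl_le_trans. apply (abs_tri X _ x). rewrite abs_sub_sym.
  apply le_add2; apply KA; lia.
Qed.

Lemma frame_good i : in_dual X (ffs i) /\ D (fxs i).
Proof.
  unfold ffs, fxs, fitem. destruct (nth_in_or_default (snd (state X lc i)) (lc (fst (state X lc i))) dflt) as [Hin|Hd].
  - pose proof (good_lc (fst (state X lc i))) as H. rewrite Forall_forall in H. apply H. auto.
  - rewrite Hd. split. apply dual_zero. auto.
Qed.

Lemma frame_ok : exists xs fs, u_frame X xs fs /\ forall j, D (xs j).
Proof.
  exists fxs, ffs. split; [split; [split|]|].
  - intro j. apply frame_good.
  - intro x. apply uconv_conv, frame_uconv.
  - apply frame_uconv.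
  - intro j. apply frame_good.
Qed.

End Constr.

Theorem theorem4p4 (X : BanachLattice) (D : X -> Prop) :
  (exists xs : nat -> X, bibasis X xs) ->
  span_dense X D ->
  exists (xs : nat -> X) (fs : nat -> X -> R),
    u_frame X xs fs /\ (forall j, D (xs j)).
Proof.
  intros [e [Hsb Hbu]] Hd.
  destruct (basis_dual X e Hsb) as [a [Ha Hac]].
  assert (Hua : forall x, u_conv X (psum X (fun j => a j x) e) x).
  { intro x. apply Hbu. apply Hac. }
  destruct (classic (exists d, D d)) as [[d0 Hd0]|Hno].
  2:{ exfalso.
      assert (Hz : forall x, x = bl_zero X).
      { intro x. apply bl_norm_eq0. apply Rle_antisym; [|apply bl_norm_ge0].
        apply small_le. intros eps He. destruct (Hd x eps He) as [y [[L [HL Hy]] Hxy]].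
        destruct L as [|p L]. simpl in Hy. subst y. rewrite sub0r in Hxy. lra.
        inversion HL. exfalso. apply Hno. eauto. }
      destruct (Hsb (bl_zero X)) as [b [_ Hb]].
      assert (H0 : b = (fun _ => 0)).
      { apply Hb. intros eps He. exists O. intros. rewrite (Hz (bsub X _ _)), nrm0. lra. }
      assert (H1 : b = (fun _ => 1)).
      { apply Hb. intros eps He. exists O. intros. rewrite (Hz (bsub X _ _)), nrm0. lra. }
      rewrite H0 in H1. apply (f_equal (fun f => f O)) in H1. lra. }
  destruct (choice (fun j c => 0 <= c /\ forall x, Rabs (a j x) <= c * bl_norm X x)) as [C HC].
  { intro j. destruct (dual_bound X (a j) (Ha j)) as [c Hc]. exists c. auto. }
  destruct (choice (fun (nj : nat * nat) L => Forall (fun p => D (snd p)) L /\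
      bl_norm X (bsub X (e (snd nj)) (lincomb X L)) <=
      (/8)^(fst nj) / ((C (snd nj) + 1) * (INR (fst nj) + 1)))) as [lf Hlf].
  { intros [n j]. simpl.
    assert (Hp : 0 < (/8)^n / ((C j + 1) * (INR n + 1))).
    { apply Rdiv_lt_0_compat. apply pow_lt; lra.
      pose proof (pos_INR n). destruct (HC j). nra. }
    destruct (Hd (e j) _ Hp) as [y [[L [HL Hy]] Hxy]]. subst y. exists L. split; auto. lra. }
  set (l := fun n j => lf (n, j)).
  assert (Hl : forall n j, Forall (fun p => D (snd p)) (l n j) /\
     bl_norm X (bsub X (e j) (lincomb X (l n j))) <= (/8)^n / ((C j + 1) * (INR n + 1))).
  { intros n j. apply (Hlf (n, j)). }
  destruct (choice (fun n w => bl_le X (bl_zero X) w /\ forall x p,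
      bl_le X (babs X (lsum X (firstn p (LB X a l n)) x)) (bl_scal X (bl_norm X x) w))) as [u Hu].
  { intro n. apply (prefix_weight X D). apply (good_LB X e a D Ha C l Hl). }
  destruct (choice (fun n (k : nat) => (1 <= k)%nat /\ bl_norm X (u n) <= INR k * (/4)^n)) as [m Hm].
  { intro n. destruct (INR_unbounded (bl_norm X (u n) / (/4)^n)) as [k Hk].
    exists (S k). split. lia. pose proof (pow_lt (/4) n ltac:(lra)).
    rewrite S_INR. apply Rmult_lt_compat_r with (r := (/4)^n) in Hk; auto.
    replace (bl_norm X (u n) / (/ 4) ^ n * (/ 4) ^ n) with (bl_norm X (u n)) in Hk by (field; lra).
    lra. }
  destruct (regulator X (v X e C l u m)) as [W HW].
  { apply (v_nonneg X e a C HC l u Hu m Hm). }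
  { apply (v_nrm X e a D C HC l Hl u m Hm). }
  apply (frame_ok X e a D Ha C HC l Hl u Hu m Hm W HW Hua d0 Hd0).
Qed.
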